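(* Coefficientwise in $\mathbb{Z}[\![t]\!]$ the following congruences hold: \begin{align*} U(t) &\equiv (1+120 t +96 t^{2} +128 t^{3} ) U(t^2) \pmod{2^{8}},\\ V(t) &\equiv (1+72 t +128 t^{2} +128 t^{3} +64 t^{4} + 128 t^{8} ) U(t^2) \pmod{2^{8}},\\ U(t) &\equiv ( 1+120 t+54 t^{2}+189 t^{3}+135 t^{4} +81 t^{5} +162 t^{6} +81 t^{7} + 162 t^{10})\, U(t^{3}) \pmod{3^{5}},\\ V(t) &\equiv ( 1+111 t+216 t^{2}+162 t^{3}+135 t^{4} + 81 t^{5} +81 t^{7} +162 t^{9} +162 t^{10} )\, U(t^{3}) \pmod{3^{5}} . \end{align*}
   Context: For $r\ge0$ let $u_{r} = \frac{(6r)!}{(3r)!\, r!^{3}}$, $U(t)=\sum_{r\ge0}u_rt^r={}_3F_2(\tfrac16,\tfrac12,\tfrac56;1,1;1728t)$ and $V(t)=\sum_{r\ge0}(6r+1)u_rt^r$. A congruence modulo $N$ of power series means all coefficients of the difference are divisible by $N$. *)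

(* Defs.v *)
From mathcomp Require Import all_boot.
Set Implicit Arguments. Unset Strict Implicit. Unset Printing Implicit Defensive.

(* u_r = (6r)! / ((3r)! r!^3), an integer (exact division). *)
Definition u (r : nat) : nat := (6 * r)`! %/ ((3 * r)`! * (r`!) ^ 3).

Definition Ucoef (n : nat) : nat := u n.
Definition Vcoef (n : nat) : nat := (6 * n + 1) * u n.

(* n-th coefficient of P(t) * U(t^k), where P = sum_i p`_i t^i is given by its
   coefficient list p (p`_i = nth 0 p i). *)
Definition polyUk_coef (p : seq nat) (k n : nat) : nat :=
  \sum_(0 <= i < n.+1 | k %| (n - i)) nth 0 p i * u ((n - i) %/ k).

(* Main.v *)
Require Import Defs.
From mathcomp Require Import all_boot.
From Stdlib Require Import NArith.
From mathcomp Require Import ring zify.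
Set Implicit Arguments. Unset Strict Implicit. Unset Printing Implicit Defensive.

Lemma u_spec r : u r * ((3 * r)`! * (r`!) ^ 3) = (6 * r)`!.
Proof.
rewrite /u divnK //.
have h1 : (6 * r)`! = 'C(6*r, 3*r) * ((3*r)`! * (3*r)`!).
  have := bin_fact (_ : 3*r <= 6*r); rewrite (_ : 6*r - 3*r = 3*r); last lia.
  by move=> ->; lia.
have h2 : (3 * r)`! = 'C(3*r, r) * (r`! * (2*r)`!).
  have := bin_fact (_ : r <= 3*r); rewrite (_ : 3*r - r = 2*r); last lia.
  by move=> ->; lia.
have h3 : (2 * r)`! = 'C(2*r, r) * (r`! * r`!).
  have := bin_fact (_ : r <= 2*r); rewrite (_ : 2*r - r = r); last lia.
  by move=> ->; lia.
rewrite h1 h2 h3.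
apply/dvdnP; exists ('C(6*r, 3*r) * 'C(3*r, r) * 'C(2*r, r)).
ring.
Qed.

Fixpoint G (p N : nat) : nat :=
  if N is N'.+1 then (if p %| N'.+1 then 1 else N'.+1) * G p N' else 1.

Lemma factG p N : 0 < p -> N`! = p ^ (N %/ p) * (N %/ p)`! * G p N.
Proof.
move=> p0; elim: N => [|N IH]; first by rewrite div0n.
rewrite factS divnS // /=; case: ifP => hd /=.
  have e : N.+1 = p * (N %/ p).+1.
    rewrite {1}(divn_eq N.+1 p) divnS // hd.
    move: hd; rewrite /dvdn => /eqP ->; rewrite addn0 mulnC add1n //.
  rewrite add1n expnS factS IH {1}e; ring.
rewrite add0n IH; ring.
Qed.

Lemma lucas_gen p m j : 0 < p -> j < p ->
  u (p*m+j) * p ^ ((3*(p*m+j)) %/ p + 3*m) * ((3*(p*m+j)) %/ p)`!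
    * G p (3*(p*m+j)) * G p (p*m+j) ^ 3 * (6*m)`!
  = p ^ ((6*(p*m+j)) %/ p) * ((6*(p*m+j)) %/ p)`! * G p (6*(p*m+j)) * u m * (3*m)`!.
Proof.
move=> p0 jp.
have hm : (p*m+j) %/ p = m by rewrite mulnC divnMDl // divn_small // addn0.
apply/eqP; rewrite -(eqn_pmul2l (_ : 0 < (m`!)^3)) ?expn_gt0 ?fact_gt0 //; apply/eqP.
transitivity ((6*(p*m+j))`! * (6*m)`!).
  rewrite -(u_spec (p*m+j)) (factG (3*(p*m+j)) p0) (factG (p*m+j) p0) hm expnD (mulnC 3 m) expnM; ring.
rewrite -(u_spec m) (factG (6*(p*m+j)) p0); ring.
Qed.

Lemma lucas21 m :
  G 2 (6*m+3) * G 2 (2*m+1) ^ 3 * u (2*m+1) = 8 * G 2 (12*m+6) * (6*m+1) * (6*m+3) * u m.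
Proof.
have h := lucas_gen m (isT : 0 < 2) (isT : 1 < 2).
have eA : (6*(2*m+1)) %/ 2 = 6*m+3.
  by rewrite (_ : 6*(2*m+1) = (6*m+3)*2) ?mulnK //; ring.
have eB : (3*(2*m+1)) %/ 2 = 3*m+1.
  rewrite (_ : 3*(2*m+1) = (3*m+1)*2 + 1); last ring.
  by rewrite divnMDl // divn_small // addn0.
have eC : 3*(2*m+1) = 6*m+3 by ring.
have eD : 6*(2*m+1) = 12*m+6 by ring.
rewrite eA eB eC eD in h.
have f1 : (3*m+1)`! = (3*m+1) * (3*m)`! by rewrite addn1 factS.
have f2 : (6*m+3)`! = (6*m+3)*(6*m+2)*(6*m+1) * (6*m)`!.
  by rewrite !addnS addn0 !factS; ring.
have e1 : 2 ^ (3*m+1+3*m) = (2^m)^6 * 2 by rewrite -expnM -expnSr; congr expn; lia.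
have e2 : 2 ^ (6*m+3) = (2^m)^6 * 8 by rewrite -expnM (_ : 8 = 2^3) // -expnD; congr expn; lia.
rewrite f1 f2 e1 e2 in h.
apply/eqP; rewrite -(eqn_pmul2l (_ : 0 < (2^m)^6 * 2 * (3*m+1) * (3*m)`! * (6*m)`!)); last first.
  by rewrite !muln_gt0 !expn_gt0 !fact_gt0 addn1.
apply/eqP.
transitivity (u (2 * m + 1) * ((2 ^ m) ^ 6 * 2) * ((3 * m + 1) * (3 * m)`!) *
      G 2 (6 * m + 3) * G 2 (2 * m + 1) ^ 3 * (6 * m)`!); first ring.
rewrite h; ring.
Qed.

Lemma lucas20 m :
  G 2 (6*m+0) * G 2 (2*m+0) ^ 3 * u (2*m+0) = G 2 (12*m+0) * u m.
Proof.
have h := lucas_gen m (isT : 0 < 2) (isT : 0 < 2).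
have eA : (6*(2*m+0)) %/ 2 = 6*m by rewrite (_ : 6*(2*m+0) = (6*m)*2) ?mulnK //; ring.
have eB : (3*(2*m+0)) %/ 2 = 3*m by rewrite (_ : 3*(2*m+0) = (3*m)*2) ?mulnK //; ring.
have eC : 3*(2*m+0) = 6*m+0 by ring.
have eD : 6*(2*m+0) = 12*m+0 by ring.
rewrite eA eB eC eD in h.
have e1 : 2 ^ (3*m+3*m) = (2^m)^6 by rewrite -expnM; congr expn; lia.
have e2 : 2 ^ (6*m) = (2^m)^6 by rewrite -expnM; congr expn; lia.
rewrite e1 e2 in h.
apply/eqP; rewrite -(eqn_pmul2l (_ : 0 < (2^m)^6 * (3*m)`! * (6*m)`!)); last first.
  by rewrite !muln_gt0 !expn_gt0 !fact_gt0.
apply/eqP.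
transitivity (u (2 * m + 0) * (2 ^ m) ^ 6 * (3 * m)`! *
      G 2 (6 * m + 0) * G 2 (2 * m + 0) ^ 3 * (6 * m)`!); first ring.
rewrite h; ring.
Qed.

Lemma lucas30 m :
  G 3 (9*m+0) * G 3 (3*m+0) ^ 3 * u (3*m+0) = G 3 (18*m+0) * u m.
Proof.
have h := lucas_gen m (isT : 0 < 3) (isT : 0 < 3).
have eA : (6*(3*m+0)) %/ 3 = 6*m by rewrite (_ : 6*(3*m+0) = (6*m)*3) ?mulnK //; ring.
have eB : (3*(3*m+0)) %/ 3 = 3*m by rewrite (_ : 3*(3*m+0) = (3*m)*3) ?mulnK //; ring.
have eC : 3*(3*m+0) = 9*m+0 by ring.
have eD : 6*(3*m+0) = 18*m+0 by ring.
rewrite eA eB eC eD in h.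
have e1 : 3 ^ (3*m+3*m) = (3^m)^6 by rewrite -expnM; congr expn; lia.
have e2 : 3 ^ (6*m) = (3^m)^6 by rewrite -expnM; congr expn; lia.
rewrite e1 e2 in h.
apply/eqP; rewrite -(eqn_pmul2l (_ : 0 < (3^m)^6 * (3*m)`! * (6*m)`!)); last first.
  by rewrite !muln_gt0 !expn_gt0 !fact_gt0.
apply/eqP.
transitivity (u (3 * m + 0) * (3 ^ m) ^ 6 * (3 * m)`! *
      G 3 (9 * m + 0) * G 3 (3 * m + 0) ^ 3 * (6 * m)`!); first ring.
rewrite h; ring.
Qed.

Lemma lucas31 m :
  G 3 (9*m+3) * G 3 (3*m+1) ^ 3 * u (3*m+1) = 6 * G 3 (18*m+6) * (6*m+1) * u m.
Proof.
have h := lucas_gen m (isT : 0 < 3) (isT : 1 < 3).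
have eA : (6*(3*m+1)) %/ 3 = 6*m+2 by rewrite (_ : 6*(3*m+1) = (6*m+2)*3) ?mulnK //; ring.
have eB : (3*(3*m+1)) %/ 3 = 3*m+1 by rewrite (_ : 3*(3*m+1) = (3*m+1)*3) ?mulnK //; ring.
have eC : 3*(3*m+1) = 9*m+3 by ring.
have eD : 6*(3*m+1) = 18*m+6 by ring.
rewrite eA eB eC eD in h.
have f1 : (3*m+1)`! = (3*m+1) * (3*m)`! by rewrite addn1 factS.
have f2 : (6*m+2)`! = (6*m+2)*(6*m+1) * (6*m)`!.
  by rewrite !addnS addn0 !factS; ring.
have e1 : 3 ^ (3*m+1+3*m) = (3^m)^6 * 3 by rewrite -expnM -expnSr; congr expn; lia.
have e2 : 3 ^ (6*m+2) = (3^m)^6 * 9 by rewrite -expnM (_ : 9 = 3^2) // -expnD; congr expn; lia.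
rewrite f1 f2 e1 e2 in h.
apply/eqP; rewrite -(eqn_pmul2l (_ : 0 < (3^m)^6 * 3 * (3*m+1) * (3*m)`! * (6*m)`!)); last first.
  by rewrite !muln_gt0 !expn_gt0 !fact_gt0 addn1.
apply/eqP.
transitivity (u (3 * m + 1) * ((3 ^ m) ^ 6 * 3) * ((3 * m + 1) * (3 * m)`!) *
      G 3 (9 * m + 3) * G 3 (3 * m + 1) ^ 3 * (6 * m)`!); first ring.
rewrite h; ring.
Qed.

Lemma lucas32 m :
  G 3 (9*m+6) * G 3 (3*m+2) ^ 3 * u (3*m+2) = 108 * G 3 (18*m+12) * (6*m+1) * (2*m+1) * u m.
Proof.
have h := lucas_gen m (isT : 0 < 3) (isT : 2 < 3).
have eA : (6*(3*m+2)) %/ 3 = 6*m+4 by rewrite (_ : 6*(3*m+2) = (6*m+4)*3) ?mulnK //; ring.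
have eB : (3*(3*m+2)) %/ 3 = 3*m+2 by rewrite (_ : 3*(3*m+2) = (3*m+2)*3) ?mulnK //; ring.
have eC : 3*(3*m+2) = 9*m+6 by ring.
have eD : 6*(3*m+2) = 18*m+12 by ring.
rewrite eA eB eC eD in h.
have f1 : (3*m+2)`! = (3*m+2) * (3*m+1) * (3*m)`! by rewrite !addnS addn0 !factS; ring.
have f2 : (6*m+4)`! = (6*m+4)*(6*m+3)*(6*m+2)*(6*m+1) * (6*m)`!.
  by rewrite !addnS addn0 !factS; ring.
have e1 : 3 ^ (3*m+2+3*m) = (3^m)^6 * 9 by rewrite -expnM (_ : 9 = 3^2) // -expnD; congr expn; lia.
have e2 : 3 ^ (6*m+4) = (3^m)^6 * 81 by rewrite -expnM (_ : 81 = 3^4) // -expnD; congr expn; lia.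
rewrite f1 f2 e1 e2 in h.
apply/eqP; rewrite -(eqn_pmul2l (_ : 0 < (3^m)^6 * 9 * ((3*m+2) * (3*m+1)) * (3*m)`! * (6*m)`!)); last first.
  by rewrite !muln_gt0 !expn_gt0 !fact_gt0 !addnS.
apply/eqP.
transitivity (u (3 * m + 2) * ((3 ^ m) ^ 6 * 9) * ((3*m+2) * (3 * m + 1) * (3 * m)`!) *
      G 3 (9 * m + 6) * G 3 (3 * m + 2) ^ 3 * (6 * m)`!); first ring.
rewrite h; ring.
Qed.

Inductive ex := EC of nat | EM of nat & nat | EG of nat & nat | EA of ex & ex | EMu of ex & ex.

Fixpoint ev (g : nat -> nat) (m : nat) (e : ex) : nat :=
  match e with
  | EC n => n | EM a b => a*m+b | EG a b => g (a*m+b)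
  | EA x y => ev g m x + ev g m y | EMu x y => ev g m x * ev g m y end.

Fixpoint evq (q : nat) (g : nat -> nat) (m : nat) (e : ex) : nat :=
  match e with
  | EC n => n %% q | EM a b => (a*m+b) %% q | EG a b => g (a*m+b) %% q
  | EA x y => (evq q g m x + evq q g m y) %% q
  | EMu x y => (evq q g m x * evq q g m y) %% q end.

Lemma ev_cong q g1 g2 m1 m2 e :
  (forall a b, g1 (a*m1+b) = g2 (a*m2+b) %[mod q]) -> m1 = m2 %[mod q] ->
  ev g1 m1 e = ev g2 m2 e %[mod q].
Proof.
move=> hg hm; elim: e => [n|a b|a b|x IHx y IHy|x IHx y IHy] //=.
- by rewrite -modnDml -modnMmr hm modnMmr modnDml.
- by rewrite -modnDm IHx IHy modnDm.
- by rewrite -modnMm IHx IHy modnMm.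
Qed.

Lemma evq_ok q g1 g2 m e : (forall N, g2 N = g1 N %[mod q]) ->
  evq q g2 m e = ev g1 m e %% q.
Proof.
move=> hg; elim: e => [n|a b|a b|x IHx y IHy|x IHx y IHy] //=.
- by rewrite IHx IHy modnDm.
- by rewrite IHx IHy modnMm.
Qed.

Fixpoint Gm (p q N : nat) : nat :=
  if N is N'.+1 then ((if p %| N'.+1 then 1 else N'.+1 %% q) * Gm p q N') %% q else 1 %% q.

Lemma Gm_ok p q N : Gm p q N = G p N %% q.
Proof.
elim: N => [|N IH] //=; rewrite IH; case: ifP => _; first by rewrite !mul1n modn_mod.
by rewrite modnMm.
Qed.

Lemma Gshift p q N : p %| q -> G p (N + q) = G p N * G p q %[mod q].
Proof.
move=> pq; elim: N => [|N IH]; first by rewrite add0n mul1n.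
rewrite addSn /= -addSn (dvdn_addl _ pq).
case: ifP => _; first by rewrite !mul1n IH.
by rewrite -mulnA -modnMm IH modnMm -modnMml modnDr modnMml mulnA.
Qed.

Lemma Gper p q N k : p %| q -> G p q ^ 2 = 1 %[mod q] ->
  G p (N + k * (2 * q)) = G p N %[mod q].
Proof.
move=> pq hq; elim: k => [|k IH]; first by rewrite mul0n addn0.
rewrite (_ : N + k.+1 * (2*q) = N + k*(2*q) + q + q); last ring.
rewrite (Gshift _ pq) -modnMml (Gshift _ pq) modnMml -mulnA.
rewrite (_ : G p q * G p q = G p q ^ 2); last by rewrite expnS expn1.
by rewrite -modnMmr hq modnMmr muln1.
Qed.

Definition lookup (t : seq nat) T N := nth 0 t (N %% T).

Lemma lookup_ok p q N : 0 < q -> p %| q -> G p q ^ 2 = 1 %[mod q] ->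
  lookup (mkseq (Gm p q) (2*q)) (2*q) N = G p N %[mod q].
Proof.
move=> q0 pq hq; rewrite /lookup nth_mkseq ?ltn_pmod ?muln_gt0 // Gm_ok modn_mod.
by rewrite {2}(divn_eq N (2*q)) addnC Gper.
Qed.

Fixpoint bk (w : nat -> nat) p k m :=
  if k is k'.+1 then w (m %% p) + bk w p k' (m %/ p) else 0.

Definition lbf w p base k m := bk w p k m + base * (0 < m %/ p ^ k).

Lemma bk_mod w p k a : 0 < p -> bk w p k a = bk w p k (a %% p ^ k).
Proof.
move=> p0; elim: k a => [|k IH] a //=.
rewrite (@modn_dvdm (p ^ k.+1)) ?dvdn_exp //; congr (_ + _).
rewrite divn_modl ?dvdn_exp // expnS mulKn // -IH //.
Qed.

Definition okv p K q (lk : nat -> nat) r v eX eB eC :=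
  [&& p ^ (K - v) %| q, evq q lk r eX %% p != 0 &
      evq q lk r eB == evq q lk r eC %[mod p ^ (K - v)]].

Definition check p K q base k w s lo (cond : pred nat) eX eB eC :=
  let t := mkseq (Gm p q) (2*q) in let lk := lookup t (2*q) in
  all (fun r => cond r ==>
        (((lo <= r) ==> okv p K q lk r (lbf w p base k (r+s)) eX eB eC)
          && okv p K q lk r (bk w p k (r+s) + base) eX eB eC)) (iota 0 (2*q)).

Lemma main_case p K q base k w s lo cond eX eB eC :
  prime p -> 0 < q -> p %| q -> p ^ k %| 2 * q -> G p q ^ 2 = 1 %[mod q] ->
  (forall m, p ^ (lbf w p base k m) %| u m) ->
  check p K q base k w s lo cond eX eB eC ->
  forall m, lo <= m -> cond (m %% (2*q)) ->
  exists v, [/\ p ^ v %| u (m + s), coprime (ev (G p) m eX) p &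
               ev (G p) m eB = ev (G p) m eC %[mod p ^ (K - v)]].
Proof.
move=> pp q0 pq pkT hG hval hc m lom cm.
have p0 := prime_gt0 pp.
set T := 2 * q in pkT hc cm *.
have T0 : 0 < T by rewrite muln_gt0.
set r := m %% T in cm *.
have rT : r < T by rewrite ltn_pmod.
move/allP: hc => /(_ r); rewrite mem_iota add0n rT cm /= => /(_ isT) /andP [hA hB].
set lk := lookup (mkseq (Gm p q) T) T in hA hB.
have evper e : ev (G p) m e = evq q lk r e %[mod q].
  rewrite (@evq_ok q (G p)); last by move=> N; rewrite lookup_ok.
  rewrite modn_mod; apply: ev_cong; last by rewrite modn_dvdm // dvdn_mull.
  move=> a b; rewrite {1}(divn_eq m T).
  rewrite (_ : a * (m %/ T * T + m %% T) + b = a*r+b + (a*(m%/T))*(2*q)) ?Gper //.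
  rewrite /r /T; ring.
have sound v : okv p K q lk r v eX eB eC -> p ^ v %| u (m + s) ->
   exists v, [/\ p ^ v %| u (m + s), coprime (ev (G p) m eX) p &
               ev (G p) m eB = ev (G p) m eC %[mod p ^ (K - v)]].
  case/and3P => hd hx hbc hv; exists v; split => //.
    rewrite coprime_sym prime_coprime //; apply: contra hx => /dvdnP [z hz].
    by rewrite -(@modn_dvdm q) // -evper hz modn_dvdm // modnMl.
  rewrite -(@modn_dvdm q) // evper modn_dvdm // (eqP hbc).
  by rewrite -(@modn_dvdm q) // -evper modn_dvdm.
case: (ltnP m T) => hmT.
  have rm : r = m by rewrite /r modn_small.
  have hA' : okv p K q lk r (lbf w p base k (m + s)) eX eB eC.
    by move: hA; rewrite {1 3}rm lom.
  by apply: (sound _ hA'); apply: hval.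
apply: (sound _ hB).
apply: dvdn_trans (hval (m + s)); rewrite dvdn_exp2l // /lbf.
rewrite (bk_mod w k (m + s) p0) (bk_mod w k (r + s) p0).
have -> : (r + s) %% p ^ k = (m + s) %% p ^ k.
  by rewrite /r -modnDml modn_dvdm // modnDml.
rewrite leq_add2l divn_gt0 ?expn_gt0 ?p0 //.
rewrite (leq_trans _ (leq_addr s m)) ?muln1 //.
exact: leq_trans (dvdn_leq T0 pkT) hmT.
Qed.

Lemma modn_cancel X a b d : coprime X d -> X * a = X * b %[mod d] -> a = b %[mod d].
Proof.
wlog le : a b / b <= a.
  move=> H cX e; case: (leqP b a) => h; first exact: H.
  by symmetry; exact: (H b a (ltnW h) cX (esym e)).
move=> cX e; apply/eqP; rewrite eqn_mod_dvd //.
move/eqP: e; rewrite eqn_mod_dvd; last by rewrite leq_mul2l le orbT.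
by rewrite -mulnBr Gauss_dvdr // coprime_sym.
Qed.

Lemma core p K v X B C lhs rhs y : prime p ->
  X * lhs = B * y -> X * rhs = C * y -> coprime X p -> p ^ v %| y ->
  B = C %[mod p ^ (K - v)] -> lhs = rhs %[mod p ^ K].
Proof.
move=> pp h1 h2 cX hy hbc.
apply: (@modn_cancel X); first by rewrite coprime_sym; apply: coprimeXl; rewrite coprime_sym.
rewrite h1 h2.
case: (leqP K v) => hKv.
  have hK : p ^ K %| y := dvdn_trans (dvdn_exp2l p hKv) hy.
  by rewrite (eqP (dvdn_mull B hK)) (eqP (dvdn_mull C hK)).
move: hy => /dvdnP [y' ->].
have eK : p ^ K = p ^ (K - v) * p ^ v by rewrite -expnD subnK // ltnW.
rewrite !mulnA -!(mulnC y') -!mulnA -modnMmr eK -muln_modl hbc muln_modl modnMmr //.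
Qed.

Section Val.
Variables (p base : nat) (w : nat -> nat).
Hypothesis pp : prime p.
Hypothesis fam : forall m j, j < p -> exists X R,
  [/\ X * u (p * m + j) = R * u m, coprime X p & p ^ (w j) %| R].
Hypothesis hw : forall j, 0 < j < p -> base <= w j.

Lemma val_base m : 0 < m -> p ^ base %| u m.
Proof.
have p0 := prime_gt0 pp; have p1 := prime_gt1 pp.
elim/ltn_ind: m => m IH m0.
have em : m = p * (m %/ p) + m %% p by rewrite mulnC -divn_eq.
have [X [R [e cX hR]]] := fam (m %/ p) (ltn_pmod m p0).
rewrite -(@Gauss_dvdr _ X); last by apply: coprimeXl; rewrite coprime_sym.
rewrite -em in e; rewrite e.
case: (posnP (m %% p)) => hj.
  apply: dvdn_mull; apply: IH; first by rewrite ltn_Pdiv.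
  move: em; rewrite hj addn0 => em.
  have hq : 0 < m %/ p by move: em m0; case: (m %/ p) => // ->; rewrite muln0.
  exact: hq.
apply: dvdn_mulr; apply: dvdn_trans hR; rewrite dvdn_exp2l // hw // hj ltn_pmod //.
Qed.

Lemma val_gen k m : p ^ (lbf w p base k m) %| u m.
Proof.
have p0 := prime_gt0 pp.
elim: k m => [|k IH] m.
  rewrite /lbf /= expn0 divn1 add0n; case: (posnP m) => [->|m0]; first by rewrite muln0.
  by rewrite muln1 val_base.
have em : m = p * (m %/ p) + m %% p by rewrite mulnC -divn_eq.
have [X [R [e cX hR]]] := fam (m %/ p) (ltn_pmod m p0).
rewrite -(@Gauss_dvdr _ X); last by apply: coprimeXl; rewrite coprime_sym.
rewrite -em in e; rewrite e.
have -> : lbf w p base k.+1 m = w (m %% p) + lbf w p base k (m %/ p).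
  by rewrite /lbf /= expnS divnMA addnA.
by rewrite expnD dvdn_mul.
Qed.
End Val.

Lemma G_coprime p N : prime p -> coprime (G p N) p.
Proof.
move=> pp; elim: N => [|N IH] /=; first by rewrite /coprime gcd1n.
rewrite coprimeMl IH andbT; case: ifP => h; first by rewrite /coprime gcd1n.
by rewrite coprime_sym prime_coprime // h.
Qed.

Lemma Gsq p q : (Gm p q q ^ 2) %% q == 1 %% q -> G p q ^ 2 = 1 %[mod q].
Proof. by rewrite Gm_ok modnXm => /eqP. Qed.

Definition cube e := EMu e (EMu e e).
Definition w3 j := if j == 1 then 1 else if j == 2 then 3 else 0.
Definition w2 j := if j == 1 then 3 else 0.

Lemma fam2 m j : j < 2 -> exists X R,
  [/\ X * u (2 * m + j) = R * u m, coprime X 2 & 2 ^ (w2 j) %| R].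
Proof.
have cG N : coprime (G 2 N) 2 by apply: G_coprime.
case: j => [|[|//]] _.
  exists (G 2 (6*m+0) * G 2 (2*m+0) ^ 3), (G 2 (12*m+0)); split.
  - by rewrite lucas20.
  - by rewrite coprimeMl coprimeXl ?cG.
  - by rewrite /w2 /= expn0 dvd1n.
exists (G 2 (6*m+3) * G 2 (2*m+1) ^ 3), (8 * G 2 (12*m+6) * (6*m+1) * (6*m+3)); split.
- by rewrite lucas21.
- by rewrite coprimeMl coprimeXl ?cG.
- by rewrite /w2 /= -!mulnA dvdn_mulr.
Qed.

Lemma fam3 m j : j < 3 -> exists X R,
  [/\ X * u (3 * m + j) = R * u m, coprime X 3 & 3 ^ (w3 j) %| R].
Proof.
have cG N : coprime (G 3 N) 3 by apply: G_coprime.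
case: j => [|[|[|//]]] _.
- exists (G 3 (9*m+0) * G 3 (3*m+0) ^ 3), (G 3 (18*m+0)); split.
  + by rewrite lucas30.
  + by rewrite coprimeMl coprimeXl ?cG.
  + by rewrite /w3 /= expn0 dvd1n.
- exists (G 3 (9*m+3) * G 3 (3*m+1) ^ 3), (6 * G 3 (18*m+6) * (6*m+1)); split.
  + by rewrite lucas31.
  + by rewrite coprimeMl coprimeXl ?cG.
  + by rewrite /w3 /= -!mulnA (_ : 6 = 3 * 2) // -mulnA dvdn_mulr.
- exists (G 3 (9*m+6) * G 3 (3*m+2) ^ 3), (108 * G 3 (18*m+12) * (6*m+1) * (2*m+1)); split.
  + by rewrite lucas32.
  + by rewrite coprimeMl coprimeXl ?cG.
  + by rewrite /w3 /= -!mulnA (_ : 108 = 3^3 * 4) // -mulnA dvdn_mulr.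
Qed.

Lemma val2 k m : 2 ^ (lbf w2 2 3 k m) %| u m.
Proof. apply: val_gen => //; [exact: fam2 | by case=> [|[|]]]. Qed.
Lemma val3 k m : 3 ^ (lbf w3 3 1 k m) %| u m.
Proof. apply: val_gen => //; [exact: fam3 | by case=> [|[|[|]]]]. Qed.

Lemma val2b m : 0 < m -> 8 %| u m.
Proof. move=> m0; apply: (@val_base 2 3 w2) => //; [exact: fam2 | by case=> [|[|]]]. Qed.
Lemma val3b m : 0 < m -> 3 %| u m.
Proof. move=> m0; apply: (@val_base 3 1 w3) => //; [exact: fam3 | by case=> [|[|[|]]]]. Qed.

Lemma val3_2 x : 2 <= x -> x %% 3 != 0 -> 9 %| u x.
Proof.
move=> x2 hx; apply: dvdn_trans (val3 1 x); rewrite /lbf /= expn1.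
rewrite (_ : 9 = 3 ^ 2) // dvdn_exp2l //.
have : x %% 3 < 3 by rewrite ltn_pmod.
move: hx; rewrite /w3; case: (x %% 3) (divn_eq x 3) => [|[|[|//]]] //= e _ _.
rewrite divn_gt0 //; lia.
Qed.

Lemma sub_div i k m j : 0 < k -> i <= k * m + j -> i %% k = j ->
  (k * m + j - i) %/ k = m - i %/ k.
Proof.
move=> k0 hi hij.
rewrite {1}(divn_eq i k) hij subnDr (mulnC k m) -mulnBl mulnK //.
Qed.

Lemma poly_expand P k m j : 0 < k -> j < k -> size P <= (k*m+j).+1 ->
  polyUk_coef P k (k*m+j) =
  \sum_(0 <= i < size P | i %% k == j) nth 0 P i * u (m - i %/ k).
Proof.
move=> k0 jk hs; rewrite /polyUk_coef (big_cat_nat (n:=size P)) //=.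
rewrite [X in _ + X]big1_seq ?addn0; last first.
  move=> i /andP [_]; rewrite mem_index_iota => /andP [hi _].
  by rewrite nth_default.
rewrite big_nat_cond [RHS]big_nat_cond; apply: eq_big => i.
  rewrite leq0n /=; case hi: (i < size P) => //=.
  have hin : i <= k * m + j by rewrite -ltnS (leq_trans hi hs).
  rewrite -eqn_mod_dvd // (mulnC k m) modnMDl modn_small // eq_sym //.
rewrite leq0n /= => /andP [hi hc].
have hin : i <= k * m + j by rewrite -ltnS (leq_trans hi hs).
have hc' : i %% k = j.
  move: hc; rewrite -eqn_mod_dvd // (mulnC k m) modnMDl modn_small // => /eqP //.
by rewrite sub_div.
Qed.

Lemma modn_drop a b M : M %| b -> a + b = a %[mod M].
Proof. by move/dvdnP=> [c ->]; rewrite addnC modnMDl. Qed.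

Lemma dvd_cu M c d x : M %| c * d -> d %| x -> M %| c * x.
Proof. by move=> h1 h2; apply: dvdn_trans h1 (dvdn_mul (dvdnn c) h2). Qed.

Lemma Gsq2 : G 2 32 ^ 2 = 1 %[mod 32].
Proof. by apply: Gsq; vm_compute. Qed.
Lemma Gsq3 : G 3 81 ^ 2 = 1 %[mod 81].
Proof. by apply: Gsq; vm_compute. Qed.

Definition L20 := EMu (EG 6 0) (cube (EG 2 0)).
Definition R20 := EG 12 0.

Lemma chkU20 : check 2 8 32 3 6 w2 0 5 predT L20 R20 (EMu (EC 1) L20).
Proof. by vm_compute. Qed.

Lemma caseU20 m : 5 <= m ->
  u (2*m+0) = polyUk_coef [:: 1; 120; 96; 128] 2 (2*m+0) %[mod 2 ^ 8].
Proof.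
move=> m5.
rewrite poly_expand //; last by rewrite /=; lia.
rewrite unlock /divn /= !subn0.
rewrite [in RHS]addn0 modn_drop; last first.
  by apply: (@dvd_cu _ _ 8) => //; apply: val2b; lia.
have [v [hv cX hbc]] := main_case (isT : prime 2) (isT : 0 < 32) (isT : 2 %| 32)
   (isT : 2 ^ 6 %| 2 * 32) Gsq2 (@val2 6) chkU20 m5 isT.
rewrite addn0 in hv.
apply: (core (K:=8) (v:=v) (X := ev (G 2) m L20) (B := ev (G 2) m R20)
   (C := ev (G 2) m (EMu (EC 1) L20)) (y := u m) (isT : prime 2)) => //=.
  transitivity (G 2 (6*m+0) * G 2 (2*m+0)^3 * u(2*m+0)); first ring.
  by rewrite lucas20.
ring.
Qed.

Lemma u_rec n : (n+1)^3 * u (n+1) = 8 * (6*n+1) * (6*n+3) * (6*n+5) * u n.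
Proof.
have f3 : (3*(n+1))`! = (3*n+3)*(3*n+2)*(3*n+1)*(3*n)`!.
  by rewrite (_ : 3*(n+1) = 3*n+3) ?addnS ?addn0 ?factS; ring.
have f1 : (n+1)`! = (n+1) * n`! by rewrite addn1 factS.
have f6 : (6*(n+1))`! = (6*n+6)*(6*n+5)*(6*n+4)*(6*n+3)*(6*n+2)*(6*n+1)*(6*n)`!.
  by rewrite (_ : 6*(n+1) = 6*n+6) ?addnS ?addn0 ?factS; ring.
apply/eqP; rewrite -(eqn_pmul2l (_ : 0 < (3*n)`! * (n`!)^3 * ((3*n+1)*(3*n+2)*(3*n+3)))); last first.
  by rewrite !muln_gt0 ?expn_gt0 ?fact_gt0 ?addnS.
apply/eqP.
transitivity (u (n+1) * ((3*(n+1))`! * ((n+1)`!)^3)); first by rewrite f3 f1; ring.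
rewrite u_spec f6 -(u_spec n); ring.
Qed.

Lemma conv_id m L Z y w c0 c1 c1' : c1 = 3 * c1' ->
  Z = 8*(6*m+1)*(2*m+1)*(6*m+5) ->
  (m+1)^3 * y = 8*(6*m+1)*(6*m+3)*(6*m+5) * w ->
  (L*Z) * (c0*y + c1*w) = (c0*(L*Z) + c1'*(L*((1*m+1)*((1*m+1)*(1*m+1))))) * y.
Proof.
move=> -> -> h.
transitivity (c0*(L*(8*(6*m+1)*(2*m+1)*(6*m+5)))*y + c1'*L*(8*(6*m+1)*(6*m+3)*(6*m+5) * w)).
  ring.
rewrite -h; ring.
Qed.

Ltac t2 := first [ by rewrite mul0n dvdn0 | apply: (@dvd_cu _ _ 8); [done | apply: val2b; lia] ].
Ltac t3 := first [ by rewrite mul0n dvdn0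
                 | apply: (@dvd_cu _ _ 3); [done | apply: val3b; lia]
                 | apply: (@dvd_cu _ _ 9); [done | apply: val3_2; lia] ].
Ltac dsum2 := lazymatch goal with
  | |- is_true (_ %| _ + _) => apply: dvdn_add; [dsum2 | dsum2] | _ => t2 end.
Ltac dsum3 := lazymatch goal with
  | |- is_true (_ %| _ + _) => apply: dvdn_add; [dsum3 | dsum3] | _ => t3 end.

Definition L21 := EMu (EG 6 3) (cube (EG 2 1)).
Definition R21 := EMu (EC 8) (EMu (EG 12 6) (EMu (EM 6 1) (EM 6 3))).
Definition L30 := EMu (EG 9 0) (cube (EG 3 0)).
Definition R30 := EG 18 0.
Definition L31 := EMu (EG 9 3) (cube (EG 3 1)).
Definition R31 := EMu (EC 6) (EMu (EG 18 6) (EM 6 1)).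
Definition L32 := EMu (EG 9 6) (cube (EG 3 2)).
Definition R32 := EMu (EC 108) (EMu (EG 18 12) (EMu (EM 6 1) (EM 2 1))).
Definition L30c := EMu (EG 9 9) (cube (EG 3 3)).
Definition R30c := EG 18 18.
Definition L31c := EMu (EG 9 12) (cube (EG 3 4)).
Definition R31c := EMu (EC 6) (EMu (EG 18 24) (EM 6 7)).
Definition Z3 := EMu (EC 8) (EMu (EM 6 1) (EMu (EM 2 1) (EM 6 5))).
Definition CC c0 c1 L := EA (EMu (EC c0) (EMu L Z3)) (EMu (EC c1) (EMu L (cube (EM 1 1)))).

Definition PU2 := [:: 1; 120; 96; 128].
Definition PV2 := [:: 1; 72; 128; 128; 64; 0; 0; 0; 128].
Definition PU3 := [:: 1; 120; 54; 189; 135; 81; 162; 81; 0; 0; 162].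
Definition PV3 := [:: 1; 111; 216; 162; 135; 81; 0; 81; 0; 162; 162].

Definition c3 (r : nat) := r %% 3 != 1.
Definition c3c (r : nat) := r %% 3 == 0.

Lemma chkU21 : check 2 8 32 3 6 w2 0 5 predT L21 R21 (EMu (EC 120) L21).
Proof. by vm_compute. Qed.
Lemma chkV20 : check 2 8 32 3 6 w2 0 5 predT L20 (EMu (EM 12 1) R20) (EMu (EC 1) L20).
Proof. by vm_compute. Qed.
Lemma chkV21 : check 2 8 32 3 6 w2 0 5 predT L21 (EMu (EM 12 7) R21) (EMu (EC 72) L21).
Proof. by vm_compute. Qed.
Lemma chkU30 : check 3 5 81 1 4 w3 0 5 c3 L30 R30 (EMu (EC 1) L30).
Proof. by vm_compute. Qed.
Lemma chkU31 : check 3 5 81 1 4 w3 0 5 c3 L31 R31 (EMu (EC 120) L31).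
Proof. by vm_compute. Qed.
Lemma chkU32 : check 3 5 81 1 4 w3 0 5 predT L32 R32 (EMu (EC 54) L32).
Proof. by vm_compute. Qed.
Lemma chkV30 : check 3 5 81 1 4 w3 0 5 predT L30 (EMu (EM 18 1) R30) (EMu (EC 1) L30).
Proof. by vm_compute. Qed.
Lemma chkV31 : check 3 5 81 1 4 w3 0 5 c3 L31 (EMu (EM 18 7) R31) (EMu (EC 111) L31).
Proof. by vm_compute. Qed.
Lemma chkV32 : check 3 5 81 1 4 w3 0 5 predT L32 (EMu (EM 18 13) R32) (EMu (EC 216) L32).
Proof. by vm_compute. Qed.
Lemma chkU30c : check 3 5 81 1 4 w3 1 4 c3c (EMu L30c Z3) (EMu Z3 R30c) (CC 1 63 L30c).
Proof. by vm_compute. Qed.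
Lemma chkU31c : check 3 5 81 1 4 w3 1 4 c3c (EMu L31c Z3) (EMu Z3 R31c) (CC 120 45 L31c).
Proof. by vm_compute. Qed.
Lemma chkV31c : check 3 5 81 1 4 w3 1 4 c3c (EMu L31c Z3) (EMu (EM 18 25) (EMu Z3 R31c)) (CC 111 45 L31c).
Proof. by vm_compute. Qed.

Lemma caseU21 m : 5 <= m ->
  u (2*m+1) = polyUk_coef PU2 2 (2*m+1) %[mod 2 ^ 8].
Proof.
move=> m5; rewrite poly_expand //; last by rewrite /=; lia.
rewrite unlock /divn /= !subn0 [in RHS]addn0 modn_drop; last by dsum2.
have [v [hv cX hbc]] := main_case (isT : prime 2) (isT : 0 < 32) (isT : 2 %| 32)
   (isT : 2 ^ 6 %| 2 * 32) Gsq2 (@val2 6) chkU21 m5 isT.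
rewrite addn0 in hv.
apply: (core (K:=8) (v:=v) (X := ev (G 2) m L21) (B := ev (G 2) m R21)
   (C := ev (G 2) m (EMu (EC 120) L21)) (y := u m) (isT : prime 2)) => //=.
  transitivity (G 2 (6*m+3) * G 2 (2*m+1)^3 * u(2*m+1)); first ring.
  by rewrite lucas21; ring.
ring.
Qed.

Lemma caseV20 m : 5 <= m ->
  (6*(2*m+0)+1) * u (2*m+0) = polyUk_coef PV2 2 (2*m+0) %[mod 2 ^ 8].
Proof.
move=> m5; rewrite poly_expand //; last by rewrite /=; lia.
rewrite unlock /divn /= !subn0 [in RHS]addn0 modn_drop; last by dsum2.
have [v [hv cX hbc]] := main_case (isT : prime 2) (isT : 0 < 32) (isT : 2 %| 32)
   (isT : 2 ^ 6 %| 2 * 32) Gsq2 (@val2 6) chkV20 m5 isT.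
rewrite addn0 in hv.
apply: (core (K:=8) (v:=v) (X := ev (G 2) m L20) (B := ev (G 2) m (EMu (EM 12 1) R20))
   (C := ev (G 2) m (EMu (EC 1) L20)) (y := u m) (isT : prime 2)) => //=.
  transitivity ((6*(2*m+0)+1) * (G 2 (6*m+0) * G 2 (2*m+0)^3 * u(2*m+0))); first ring.
  by rewrite lucas20; ring.
ring.
Qed.

Lemma caseV21 m : 5 <= m ->
  (6*(2*m+1)+1) * u (2*m+1) = polyUk_coef PV2 2 (2*m+1) %[mod 2 ^ 8].
Proof.
move=> m5; rewrite poly_expand //; last by rewrite /=; lia.
rewrite unlock /divn /= !subn0 [in RHS]addn0 modn_drop; last by dsum2.
have [v [hv cX hbc]] := main_case (isT : prime 2) (isT : 0 < 32) (isT : 2 %| 32)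
   (isT : 2 ^ 6 %| 2 * 32) Gsq2 (@val2 6) chkV21 m5 isT.
rewrite addn0 in hv.
apply: (core (K:=8) (v:=v) (X := ev (G 2) m L21) (B := ev (G 2) m (EMu (EM 12 7) R21))
   (C := ev (G 2) m (EMu (EC 72) L21)) (y := u m) (isT : prime 2)) => //=.
  transitivity ((6*(2*m+1)+1) * (G 2 (6*m+3) * G 2 (2*m+1)^3 * u(2*m+1))); first ring.
  by rewrite lucas21; ring.
ring.
Qed.

Lemma caseU30 m : 5 <= m -> m %% 3 != 1 ->
  u (3*m+0) = polyUk_coef PU3 3 (3*m+0) %[mod 3 ^ 5].
Proof.
move=> m5 hm; rewrite poly_expand //; last by rewrite /=; lia.
rewrite unlock /divn /= !subn0 [in RHS]addn0 modn_drop; last by dsum3.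
have hc : c3 (m %% (2*81)) by rewrite /c3 modn_dvdm.
have [v [hv cX hbc]] := main_case (isT : prime 3) (isT : 0 < 81) (isT : 3 %| 81)
   (isT : 3 ^ 4 %| 2 * 81) Gsq3 (@val3 4) chkU30 m5 hc.
rewrite addn0 in hv.
apply: (core (K:=5) (v:=v) (X := ev (G 3) m L30) (B := ev (G 3) m R30)
   (C := ev (G 3) m (EMu (EC 1) L30)) (y := u m) (isT : prime 3)) => //=.
  transitivity (G 3 (9*m+0) * G 3 (3*m+0)^3 * u (3*m+0)); first ring.
  by rewrite lucas30; ring.
ring.
Qed.

Lemma caseU31 m : 5 <= m -> m %% 3 != 1 ->
  u (3*m+1) = polyUk_coef PU3 3 (3*m+1) %[mod 3 ^ 5].
Proof.
move=> m5 hm; rewrite poly_expand //; last by rewrite /=; lia.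
rewrite unlock /divn /= !subn0 [in RHS]addn0 modn_drop; last by dsum3.
have hc : c3 (m %% (2*81)) by rewrite /c3 modn_dvdm.
have [v [hv cX hbc]] := main_case (isT : prime 3) (isT : 0 < 81) (isT : 3 %| 81)
   (isT : 3 ^ 4 %| 2 * 81) Gsq3 (@val3 4) chkU31 m5 hc.
rewrite addn0 in hv.
apply: (core (K:=5) (v:=v) (X := ev (G 3) m L31) (B := ev (G 3) m R31)
   (C := ev (G 3) m (EMu (EC 120) L31)) (y := u m) (isT : prime 3)) => //=.
  transitivity (G 3 (9*m+3) * G 3 (3*m+1)^3 * u (3*m+1)); first ring.
  by rewrite lucas31; ring.
ring.
Qed.

Lemma caseU32 m : 5 <= m ->
  u (3*m+2) = polyUk_coef PU3 3 (3*m+2) %[mod 3 ^ 5].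
Proof.
move=> m5; rewrite poly_expand //; last by rewrite /=; lia.
rewrite unlock /divn /= !subn0 [in RHS]addn0 modn_drop; last by dsum3.
have [v [hv cX hbc]] := main_case (isT : prime 3) (isT : 0 < 81) (isT : 3 %| 81)
   (isT : 3 ^ 4 %| 2 * 81) Gsq3 (@val3 4) chkU32 m5 isT.
rewrite addn0 in hv.
apply: (core (K:=5) (v:=v) (X := ev (G 3) m L32) (B := ev (G 3) m R32)
   (C := ev (G 3) m (EMu (EC 54) L32)) (y := u m) (isT : prime 3)) => //=.
  transitivity (G 3 (9*m+6) * G 3 (3*m+2)^3 * u (3*m+2)); first ring.
  by rewrite lucas32; ring.
ring.
Qed.

Lemma caseV30 m : 5 <= m ->
  (6*(3*m+0)+1) * u (3*m+0) = polyUk_coef PV3 3 (3*m+0) %[mod 3 ^ 5].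
Proof.
move=> m5; rewrite poly_expand //; last by rewrite /=; lia.
rewrite unlock /divn /= !subn0 [in RHS]addn0 modn_drop; last by dsum3.
have [v [hv cX hbc]] := main_case (isT : prime 3) (isT : 0 < 81) (isT : 3 %| 81)
   (isT : 3 ^ 4 %| 2 * 81) Gsq3 (@val3 4) chkV30 m5 isT.
rewrite addn0 in hv.
apply: (core (K:=5) (v:=v) (X := ev (G 3) m L30) (B := ev (G 3) m (EMu (EM 18 1) R30))
   (C := ev (G 3) m (EMu (EC 1) L30)) (y := u m) (isT : prime 3)) => //=.
  transitivity ((6*(3*m+0)+1) * (G 3 (9*m+0) * G 3 (3*m+0)^3 * u (3*m+0))); first ring.
  by rewrite lucas30; ring.
ring.
Qed.

Lemma caseV31 m : 5 <= m -> m %% 3 != 1 ->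
  (6*(3*m+1)+1) * u (3*m+1) = polyUk_coef PV3 3 (3*m+1) %[mod 3 ^ 5].
Proof.
move=> m5 hm; rewrite poly_expand //; last by rewrite /=; lia.
rewrite unlock /divn /= !subn0 [in RHS]addn0 modn_drop; last by dsum3.
have hc : c3 (m %% (2*81)) by rewrite /c3 modn_dvdm.
have [v [hv cX hbc]] := main_case (isT : prime 3) (isT : 0 < 81) (isT : 3 %| 81)
   (isT : 3 ^ 4 %| 2 * 81) Gsq3 (@val3 4) chkV31 m5 hc.
rewrite addn0 in hv.
apply: (core (K:=5) (v:=v) (X := ev (G 3) m L31) (B := ev (G 3) m (EMu (EM 18 7) R31))
   (C := ev (G 3) m (EMu (EC 111) L31)) (y := u m) (isT : prime 3)) => //=.
  transitivity ((6*(3*m+1)+1) * (G 3 (9*m+3) * G 3 (3*m+1)^3 * u (3*m+1))); first ring.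
  by rewrite lucas31; ring.
ring.
Qed.

Lemma caseV32 m : 5 <= m ->
  (6*(3*m+2)+1) * u (3*m+2) = polyUk_coef PV3 3 (3*m+2) %[mod 3 ^ 5].
Proof.
move=> m5; rewrite poly_expand //; last by rewrite /=; lia.
rewrite unlock /divn /= !subn0 [in RHS]addn0 modn_drop; last by dsum3.
have [v [hv cX hbc]] := main_case (isT : prime 3) (isT : 0 < 81) (isT : 3 %| 81)
   (isT : 3 ^ 4 %| 2 * 81) Gsq3 (@val3 4) chkV32 m5 isT.
rewrite addn0 in hv.
apply: (core (K:=5) (v:=v) (X := ev (G 3) m L32) (B := ev (G 3) m (EMu (EM 18 13) R32))
   (C := ev (G 3) m (EMu (EC 216) L32)) (y := u m) (isT : prime 3)) => //=.
  transitivity ((6*(3*m+2)+1) * (G 3 (9*m+6) * G 3 (3*m+2)^3 * u (3*m+2))); first ring.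
  by rewrite lucas32; ring.
ring.
Qed.

Lemma caseU30c m : 4 <= m -> m %% 3 == 0 ->
  u (3*(m+1)+0) = polyUk_coef PU3 3 (3*(m+1)+0) %[mod 3 ^ 5].
Proof.
move=> m4 hm; rewrite poly_expand //; last by rewrite /=; lia.
rewrite unlock /divn /= !subn0 addnK [in RHS]addn0 addnA modn_drop; last by dsum3.
have hc : c3c (m %% (2*81)) by rewrite /c3c modn_dvdm.
have [v [hv cX hbc]] := main_case (isT : prime 3) (isT : 0 < 81) (isT : 3 %| 81)
   (isT : 3 ^ 4 %| 2 * 81) Gsq3 (@val3 4) chkU30c m4 hc.
have h := lucas30 (m+1).
have e0 : 9*(m+1)+0 = 9*m+9 by ring.
have e1 : 3*(m+1)+0 = 3*m+3 by ring.
have e2 : 18*(m+1)+0 = 18*m+18 by ring.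
rewrite e0 e1 e2 in h.
rewrite e1.
apply: (core (K:=5) (v:=v) (X := ev (G 3) m (EMu L30c Z3)) (B := ev (G 3) m (EMu Z3 R30c))
   (C := ev (G 3) m (CC 1 63 L30c)) (y := u (m+1)) (isT : prime 3)) => //=.
  transitivity ((8*(6*m+1)*(2*m+1)*(6*m+5)) * (G 3 (9*m+9) * G 3 (3*m+3)^3 * u (3*m+3))); first ring.
  by rewrite h; ring.
apply: conv_id => //; first ring.
exact: u_rec.
Qed.

Lemma caseU31c m : 4 <= m -> m %% 3 == 0 ->
  u (3*(m+1)+1) = polyUk_coef PU3 3 (3*(m+1)+1) %[mod 3 ^ 5].
Proof.
move=> m4 hm; rewrite poly_expand //; last by rewrite /=; lia.
rewrite unlock /divn /= !subn0 addnK [in RHS]addn0 addnA modn_drop; last by dsum3.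
have hc : c3c (m %% (2*81)) by rewrite /c3c modn_dvdm.
have [v [hv cX hbc]] := main_case (isT : prime 3) (isT : 0 < 81) (isT : 3 %| 81)
   (isT : 3 ^ 4 %| 2 * 81) Gsq3 (@val3 4) chkU31c m4 hc.
have h := lucas31 (m+1).
have e0 : 9*(m+1)+3 = 9*m+12 by ring.
have e1 : 3*(m+1)+1 = 3*m+4 by ring.
have e2 : 18*(m+1)+6 = 18*m+24 by ring.
have e3 : 6*(m+1)+1 = 6*m+7 by ring.
rewrite e0 e1 e2 e3 in h.
rewrite e1.
apply: (core (K:=5) (v:=v) (X := ev (G 3) m (EMu L31c Z3)) (B := ev (G 3) m (EMu Z3 R31c))
   (C := ev (G 3) m (CC 120 45 L31c)) (y := u (m+1)) (isT : prime 3)) => //=.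
  transitivity ((8*(6*m+1)*(2*m+1)*(6*m+5)) * (G 3 (9*m+12) * G 3 (3*m+4)^3 * u (3*m+4))); first ring.
  by rewrite h; ring.
apply: conv_id => //; first ring.
exact: u_rec.
Qed.

Lemma caseV31c m : 4 <= m -> m %% 3 == 0 ->
  (6*(3*(m+1)+1)+1) * u (3*(m+1)+1) = polyUk_coef PV3 3 (3*(m+1)+1) %[mod 3 ^ 5].
Proof.
move=> m4 hm; rewrite poly_expand //; last by rewrite /=; lia.
rewrite unlock /divn /= !subn0 addnK [in RHS]addn0 addnA modn_drop; last by dsum3.
have hc : c3c (m %% (2*81)) by rewrite /c3c modn_dvdm.
have [v [hv cX hbc]] := main_case (isT : prime 3) (isT : 0 < 81) (isT : 3 %| 81)
   (isT : 3 ^ 4 %| 2 * 81) Gsq3 (@val3 4) chkV31c m4 hc.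
have h := lucas31 (m+1).
have e0 : 9*(m+1)+3 = 9*m+12 by ring.
have e1 : 3*(m+1)+1 = 3*m+4 by ring.
have e2 : 18*(m+1)+6 = 18*m+24 by ring.
have e3 : 6*(m+1)+1 = 6*m+7 by ring.
rewrite e0 e1 e2 e3 in h.
rewrite e1.
apply: (core (K:=5) (v:=v) (X := ev (G 3) m (EMu L31c Z3)) (B := ev (G 3) m (EMu (EM 18 25) (EMu Z3 R31c)))
   (C := ev (G 3) m (CC 111 45 L31c)) (y := u (m+1)) (isT : prime 3)) => //=.
  transitivity ((8*(6*m+1)*(2*m+1)*(6*m+5)) * ((6*(3*m+4)+1) * (G 3 (9*m+12) * G 3 (3*m+4)^3 * u (3*m+4)))); first ring.
  by rewrite h; ring.
apply: conv_id => //; first ring.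
exact: u_rec.
Qed.

Fixpoint uN (n : nat) : N :=
  if n is n'.+1 then
    ((8 * (6 * N.of_nat n' + 1) * (6 * N.of_nat n' + 3) * (6 * N.of_nat n' + 5)) * uN n'
      / (N.of_nat n' + 1) ^ 3)%N
  else 1%N.

Definition recN (n : nat) : bool :=
  N.eqb ((N.of_nat n + 1) * (N.of_nat n + 1) * (N.of_nat n + 1) * uN n.+1)%N
        ((8 * (6 * N.of_nat n + 1) * (6 * N.of_nat n + 3) * (6 * N.of_nat n + 5)) * uN n)%N.

Lemma recN_all : all recN (iota 0 14).
Proof. by vm_compute. Qed.

Lemma toNmul (a b : N) : N.to_nat (a * b)%N = N.to_nat a * N.to_nat b.
Proof. by rewrite N2Nat.inj_mul. Qed.
Lemma toNadd (a b : N) : N.to_nat (a + b)%N = N.to_nat a + N.to_nat b.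
Proof. by rewrite N2Nat.inj_add. Qed.
Lemma toNof n : N.to_nat (N.of_nat n) = n.
Proof. by rewrite Nat2N.id. Qed.
Lemma toN1 : N.to_nat 1 = 1. Proof. by []. Qed.
Lemma toNc (c : nat) : N.of_nat c = N.of_nat c. Proof. by []. Qed.

Lemma toN_1 : N.to_nat 1 = 1. Proof. by []. Qed.
Lemma toN_3 : N.to_nat 3 = 3. Proof. by []. Qed.
Lemma toN_5 : N.to_nat 5 = 5. Proof. by []. Qed.
Lemma toN_6 : N.to_nat 6 = 6. Proof. by []. Qed.
Lemma toN_8 : N.to_nat 8 = 8. Proof. by []. Qed.

Lemma uN_ok n : n <= 14 -> u n = N.to_nat (uN n).
Proof.
elim: n => [|n IH] hn; first by rewrite /u.
have hr : recN n by move/allP: recN_all => /(_ n); rewrite mem_iota add0n; apply; lia.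
move/N.eqb_spec: hr => hr.
have e := congr1 N.to_nat hr.
rewrite !toNmul !toNadd in e. rewrite (toNmul 6 (N.of_nat n)) !toNof toN_1 toN_3 toN_5 toN_6 toN_8 in e.
have ur := u_rec n; rewrite -IH in e; last lia.
rewrite -ur (_ : (n + 1) ^ 3 = (n+1)*(n+1)*(n+1)) in e; last by ring.
move/eqP: e; rewrite -!mulnA !eqn_pmul2l ?addn1 // => /eqP.
by [].
Qed.

Definition polyN (P : seq nat) (k n : nat) : N :=
  foldr (fun i acc => if k %| n - i then N.add (N.mul (N.of_nat (nth 0 P i)) (uN ((n - i) %/ k))) acc
                      else acc) N0 (index_iota 0 n.+1).

Lemma polyN_ok P k n : 0 < k -> n <= 14 -> polyUk_coef P k n = N.to_nat (polyN P k n).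
Proof.
move=> k0 hn; rewrite /polyUk_coef /polyN.
have : forall i, i \in index_iota 0 n.+1 -> (n - i) %/ k <= 14.
  move=> i _; apply: leq_trans (leq_div _ _) _; apply: leq_trans (leq_subr _ _) hn.
elim: (index_iota 0 n.+1) => [|i s IH] hs; first by rewrite big_nil.
have IH' : \sum_(i0 <- s | k %| n - i0) nth 0 P i0 * u ((n - i0) %/ k) =
   N.to_nat (foldr (fun i acc => if k %| n - i then N.add (N.mul (N.of_nat (nth 0 P i)) (uN ((n - i) %/ k))) acc
                      else acc) N0 s).
  by apply: IH => x hx; apply: hs; rewrite inE hx orbT.
rewrite big_cons /=; case: ifP => _ //.
rewrite toNadd toNmul toNof -uN_ok ?IH' //; apply: hs; rewrite inE eqxx //.
Qed.

Lemma toN_mod (a : N) M : 0 < M -> N.to_nat a %% M = N.to_nat (a mod N.of_nat M)%N.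
Proof.
move=> M0.
have hM : N.of_nat M <> 0%N by move=> h; move: M0; rewrite -(Nat2N.id M) h.
have e := N.div_mod a (N.of_nat M) hM.
have lt := N.mod_lt a (N.of_nat M) hM.
rewrite {1}e toNadd toNmul toNof mulnC modnMDl modn_small //.
have := N2Nat.inj_compare (a mod N.of_nat M) (N.of_nat M); rewrite lt toNof => /esym /PeanoNat.Nat.compare_lt_iff /ltP //.
Qed.

Lemma smallU P k M n : 0 < k -> 0 < M -> n <= 14 ->
  N.eqb (uN n mod N.of_nat M) (polyN P k n mod N.of_nat M) ->
  Ucoef n = polyUk_coef P k n %[mod M].
Proof.
move=> k0 M0 hn /N.eqb_spec h.
by rewrite /Ucoef uN_ok // polyN_ok // !toN_mod // h.
Qed.

Lemma smallV P k M n : 0 < k -> 0 < M -> n <= 14 ->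
  N.eqb (N.of_nat (6*n+1) * uN n mod N.of_nat M) (polyN P k n mod N.of_nat M) ->
  Vcoef n = polyUk_coef P k n %[mod M].
Proof.
move=> k0 M0 hn /N.eqb_spec h.
by rewrite /Vcoef uN_ok // polyN_ok // -{1}(toNof (6*n+1)) -toNmul !toN_mod // h.
Qed.

Lemma smallU2 n : n < 10 -> Ucoef n = polyUk_coef PU2 2 n %[mod 2 ^ 8].
Proof.
move=> hn; apply: smallU => //; first lia.
have : all (fun n => N.eqb (uN n mod N.of_nat (2^8)) (polyN PU2 2 n mod N.of_nat (2^8))) (iota 0 10).
  by vm_compute.
by move/allP => /(_ n); rewrite mem_iota; apply.
Qed.

Lemma smallV2 n : n < 10 -> Vcoef n = polyUk_coef PV2 2 n %[mod 2 ^ 8].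
Proof.
move=> hn; apply: smallV; [done | done | lia | ].
have : all (fun n => N.eqb (N.of_nat (6*n+1) * uN n mod N.of_nat (2^8))%N
    (polyN PV2 2 n mod N.of_nat (2^8))) (iota 0 10).
  by vm_compute.
by move/allP => /(_ n); rewrite mem_iota; apply.
Qed.

Lemma smallU3 n : n < 15 -> Ucoef n = polyUk_coef PU3 3 n %[mod 3 ^ 5].
Proof.
move=> hn; apply: smallU; [done | done | lia | ].
have : all (fun n => N.eqb (uN n mod N.of_nat (3^5)) (polyN PU3 3 n mod N.of_nat (3^5))) (iota 0 15).
  by vm_compute.
by move/allP => /(_ n); rewrite mem_iota; apply.
Qed.

Lemma smallV3 n : n < 15 -> Vcoef n = polyUk_coef PV3 3 n %[mod 3 ^ 5].
Proof.
move=> hn; apply: smallV; [done | done | lia | ].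
have : all (fun n => N.eqb (N.of_nat (6*n+1) * uN n mod N.of_nat (3^5))%N
    (polyN PV3 3 n mod N.of_nat (3^5))) (iota 0 15).
  by vm_compute.
by move/allP => /(_ n); rewrite mem_iota; apply.
Qed.

Lemma split_n p n : 0 < p -> 5 * p <= n ->
  exists m j, [/\ n = p * m + j, j < p & 5 <= m].
Proof.
move=> p0 hn; exists (n %/ p), (n %% p); split.
- by rewrite mulnC -divn_eq.
- by rewrite ltn_pmod.
- by rewrite leq_divRL.
Qed.

Lemma allU2 n : Ucoef n = polyUk_coef PU2 2 n %[mod 2 ^ 8].
Proof.
case: (ltnP n 10) => hn; first exact: smallU2.
have [m [j [-> hj m5]]] := split_n (isT : 0 < 2) hn.
rewrite /Ucoef; case: j hj => [|[|//]] _; [exact: caseU20 | exact: caseU21].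
Qed.

Lemma allV2 n : Vcoef n = polyUk_coef PV2 2 n %[mod 2 ^ 8].
Proof.
case: (ltnP n 10) => hn; first exact: smallV2.
have [m [j [-> hj m5]]] := split_n (isT : 0 < 2) hn.
rewrite /Vcoef; case: j hj => [|[|//]] _; [exact: caseV20 | exact: caseV21].
Qed.

Lemma allU3 n : Ucoef n = polyUk_coef PU3 3 n %[mod 3 ^ 5].
Proof.
case: (ltnP n 15) => hn; first exact: smallU3.
have [m [j [-> hj m5]]] := split_n (isT : 0 < 3) hn.
rewrite /Ucoef; case: j hj => [|[|[|//]]] _.
- case: (boolP (m %% 3 == 1)) => hm; last exact: caseU30.
  have em : m = (m - 1) + 1 by lia.
  rewrite em; apply: caseU30c; lia.
- case: (boolP (m %% 3 == 1)) => hm; last exact: caseU31.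
  have em : m = (m - 1) + 1 by lia.
  rewrite em; apply: caseU31c; lia.
- exact: caseU32.
Qed.

Lemma allV3 n : Vcoef n = polyUk_coef PV3 3 n %[mod 3 ^ 5].
Proof.
case: (ltnP n 15) => hn; first exact: smallV3.
have [m [j [-> hj m5]]] := split_n (isT : 0 < 3) hn.
rewrite /Vcoef; case: j hj => [|[|[|//]]] _.
- exact: caseV30.
- case: (boolP (m %% 3 == 1)) => hm; last exact: caseV31.
  have em : m = (m - 1) + 1 by lia.
  rewrite em; apply: caseV31c; lia.
- exact: caseV32.
Qed.

Theorem proposition3p7 :
  (forall n : nat,
     Ucoef n = polyUk_coef [:: 1; 120; 96; 128] 2 n %[mod 2 ^ 8]) /\
  (forall n : nat,
     Vcoef n = polyUk_coef [:: 1; 72; 128; 128; 64; 0; 0; 0; 128] 2 n %[mod 2 ^ 8]) /\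
  (forall n : nat,
     Ucoef n = polyUk_coef [:: 1; 120; 54; 189; 135; 81; 162; 81; 0; 0; 162] 3 n
       %[mod 3 ^ 5]) /\
  (forall n : nat,
     Vcoef n = polyUk_coef [:: 1; 111; 216; 162; 135; 81; 0; 81; 0; 162; 162] 3 n
       %[mod 3 ^ 5]).
Proof.
split; first exact: allU2.
split; first exact: allV2.
split; first exact: allU3.
exact: allV3.
Qed.
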